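(* Assume that $A_1,\dots,A_d$ are mutually independent, and that they are mutually independent conditionally on $\hat Y$, i.e. for every $y\in\mathcal Y$ and $a=(a_1,\dots,a_d)\in\mathcal A$, $p_{A\mid \hat Y}(a\mid y)=\prod_{k=1}^d p_{A_k\mid\hat Y}(a_k\mid y)$. Then $$u^*=\sup_{y\in\mathcal Y}\sum_{k=1}^d\ \sup_{(a_k,a_k')\in\mathcal A_k^2} u_k(y,a_k,a_k')\ \le\ \sum_{k=1}^d u_k^* .$$
   Context: Let $\hat Y=h(X)$ be the prediction of a fixed deterministic classifier, taking values in a finite set $\mathcal Y$, and let $A=(A_1,\dots,A_d)$ be a random vector of protected attributes, $A_k$ taking values in a finite set $\mathcal A_k$, $\mathcal A=\mathcal A_1\times\dots\times\mathcal A_d$. Write $p_V(v)=\Pr(V=v)$, $p_{V,W}(v,w)=\Pr(V=v,W=w)$ and $p_{V\mid W}(v\mid w)=\Pr(V=v\mid W=w)$. Assume $p_{A,\hat Y}(a,y)>0$ for all $(a,y)\in\mathcal A\times\mathcal Y$. For $y\in\mathcal Y$, $a,a'\in\mathcal A$, set $u(y,a,a')=\big|\log\big(p_{\hat Y\mid A}(y\mid a)/p_{\hat Y\mid A}(y\mid a')\big)\big|$ and the intersectional unfairness $u^*=\sup_{y\in\mathcal Y}\sup_{(a,a')\in\mathcal A^2}u(y,a,a')$. For each $k$ and $a_k,a_k'\in\mathcal A_k$, set $u_k(y,a_k,a_k')=\big|\log\big(p_{\hat Y\mid A_k}(y\mid a_k)/p_{\hat Y\mid A_k}(y\mid a_k')\big)\big|$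 and the marginal unfairness $u_k^*=\sup_{y\in\mathcal Y}\sup_{(a_k,a_k')\in\mathcal A_k^2}u_k(y,a_k,a_k')$. *)

(* Defs.v *)
From HB Require Import structures.
From mathcomp Require Import all_boot all_order all_algebra.
From mathcomp Require Import reals exp.
Set Implicit Arguments. Unset Strict Implicit. Unset Printing Implicit Defensive.
Import Order.TTheory GRing.Theory Num.Theory.
Local Open Scope ring_scope.

(* Setting: d protected attributes, A_k takes values in the finite type T k;
   the attribute vector A takes values in the product {dffun forall k, T k};
   the prediction Yhat takes values in the finite type Y.  Only the joint law of
   (A, Yhat) matters; it is given by a pmf P on A x Y. *)
Section Fair.
Variables (R : realType) (d : nat) (T : 'I_d -> finType) (Y : finType).
Definition attr := {dffun forall k : 'I_d, T k}.
Variable P : {ffun attr * Y -> R}.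

Definition is_pmf := (forall z, 0 <= P z) /\ \sum_z P z = 1.

Definition pAY (a : attr) (y : Y) : R := P (a, y).
Definition pA (a : attr) : R := \sum_(y : Y) P (a, y).
Definition pY (y : Y) : R := \sum_(a : attr) P (a, y).
Definition pAk (k : 'I_d) (ak : T k) : R := \sum_(a : attr | a k == ak) pA a.
Definition pAkY (k : 'I_d) (ak : T k) (y : Y) : R :=
  \sum_(a : attr | a k == ak) P (a, y).

Definition pY_A (y : Y) (a : attr) : R := pAY a y / pA a.
Definition pY_Ak (k : 'I_d) (y : Y) (ak : T k) : R := pAkY ak y / pAk ak.
Definition pA_Y (a : attr) (y : Y) : R := pAY a y / pY y.
Definition pAk_Y (k : 'I_d) (ak : T k) (y : Y) : R := pAkY ak y / pY y.

(* unfairness measures; suprema over finite sets of nonnegative reals are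
   written as iterated max with neutral element 0 *)
Definition u (y : Y) (a a' : attr) : R := `| ln (pY_A y a / pY_A y a') |.
Definition ustar : R :=
  \big[Num.max/0]_(y : Y) \big[Num.max/0]_(aa : attr * attr) u y aa.1 aa.2.
Definition uk (k : 'I_d) (y : Y) (ak ak' : T k) : R :=
  `| ln (pY_Ak y ak / pY_Ak y ak') |.
Definition ukstar (k : 'I_d) : R :=
  \big[Num.max/0]_(y : Y) \big[Num.max/0]_(aa : T k * T k) uk y aa.1 aa.2.

Definition mutually_independent :=
  forall a : attr, pA a = \prod_(k < d) pAk (a k).
Definition cond_mutually_independent :=
  forall (y : Y) (a : attr), pA_Y a y = \prod_(k < d) pAk_Y (a k) y.
End Fair.

(* Main.v *)
Require Import Defs.
From HB Require Import structures.
From mathcomp Require Import all_boot all_order all_algebra.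
From mathcomp Require Import reals exp.
From mathcomp Require Import ring.
Import Order.TTheory GRing.Theory Num.Theory.
Local Open Scope ring_scope.
Set Implicit Arguments. Unset Strict Implicit.
Lemma maxsum (R : realType) (d : nat) (T : 'I_d -> finType)
  (h : forall k, T k -> T k -> R) (a0 : attr T) :
  (forall k x x', h k x' x = - h k x x') ->
  \big[Num.max/0]_(aa : attr T * attr T) `|\sum_(k < d) h k (aa.1 k) (aa.2 k)|
  = \sum_(k < d) \big[Num.max/0]_(p : T k * T k) `|h k p.1 p.2|.
Proof.
move=> hN; apply/eqP; rewrite eq_le; apply/andP; split.
  apply: bigmax_le; first by apply: sumr_ge0 => k _; exact: bigmax_ge_id.
  move=> aa _; apply: (le_trans (ler_norm_sum _ _ _)); apply: ler_sum => k _.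
  exact: (le_bigmax _ (fun p : T k * T k => `|h k p.1 p.2|) (aa.1 k, aa.2 k)).
have b k : {p : T k * T k | \big[Num.max/0]_(p : T k * T k) `|h k p.1 p.2| = `|h k p.1 p.2|}.
  have [i0 _ ->] := @eq_bigmax _ R _ 0 (a0 k, a0 k) predT
      (fun p : T k * T k => `|h k p.1 p.2|) isT (fun _ _ => normr_ge0 _).
  by exists i0.
pose c k := let p := sval (b k) in if 0 <= h k p.1 p.2 then p else (p.2, p.1).
have hc k : 0 <= h k (c k).1 (c k).2 /\
   \big[Num.max/0]_(p : T k * T k) `|h k p.1 p.2| = h k (c k).1 (c k).2.
  rewrite /c; case: (b k) => p hp /=; rewrite hp; case: ifP => /= H.
    by split => //; rewrite ger0_norm.
  rewrite hN; move/negbT: H; rewrite -ltNge => H.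
  by rewrite ltr0_norm // oppr_ge0 ltW.
apply: (bigmax_sup (([ffun k => (c k).1], [ffun k => (c k).2]) : attr T * attr T)) => //=.
rewrite ger0_norm; last by apply: sumr_ge0 => k _; rewrite !ffunE; case: (hc k).
by apply: ler_sum => k _; rewrite !ffunE; case: (hc k) => _ ->.
Qed.

Lemma lnVall (R : realType) (x : R) : ln x^-1 = - ln x.
Proof.
have [x0|x0] := ltP 0 x; first by rewrite lnV.
by rewrite !ln0 ?oppr0 // invr_le0.
Qed.

Lemma ln_prod (R : realType) (I : Type) (r : seq I) (F : I -> R) :
  (forall i, 0 < F i) -> ln (\prod_(i <- r) F i) = \sum_(i <- r) ln (F i).
Proof.
move=> Fp; elim: r => [|i r IH]; first by rewrite !big_nil ln1.
rewrite !big_cons lnM ?IH // qualifE /=; first exact: Fp.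
by apply: prodr_gt0 => j _; exact: Fp.
Qed.

Lemma sum_ge_term (R : realType) (I : finType) (Pr : pred I) (F : I -> R) j :
  Pr j -> (forall i, 0 <= F i) -> F j <= \sum_(i | Pr i) F i.
Proof.
move=> Pj F0; rewrite (bigD1 j) //= lerDl; exact: sumr_ge0.
Qed.

Lemma sum_ge_term1 (R : realType) (I : finType) (F : I -> R) j :
  (forall i, 0 <= F i) -> F j <= \sum_i F i.
Proof.
move=> F0; rewrite (bigD1 j) //= lerDl; exact: sumr_ge0.
Qed.

Section Key.
Variables (R : realType) (d : nat) (T : 'I_d -> finType) (Y : finType).
Variable P : {ffun attr T * Y -> R}.
Hypothesis P0 : forall z, 0 <= P z.
Hypothesis Hpos : forall (a : attr T) (y : Y), 0 < pAY P a y.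
Hypothesis Hind : mutually_independent P.
Hypothesis Hcind : cond_mutually_independent P.
Variable y : Y.

Lemma pY_pos (a0 : attr T) : 0 < pY P y.
Proof.
apply: (lt_le_trans (Hpos a0 y)); apply: (@sum_ge_term1 R (attr T) (fun a => P (a, y)) a0) => i; exact: P0.
Qed.

Lemma pA_pos a : 0 < pA P a.
Proof.
apply: (lt_le_trans (Hpos a y)); apply: (@sum_ge_term1 R Y (fun y => P (a, y)) y) => i; exact: P0.
Qed.

Lemma pAkY_pos (a : attr T) k : 0 < pAkY P (a k) y.
Proof.
apply: (lt_le_trans (Hpos a y)).
apply: (@sum_ge_term R (attr T) (fun a' : attr T => a' k == a k) (fun a => P (a, y)) a) => // i; exact: P0.
Qed.

Lemma pAk_pos (a : attr T) k : 0 < pAk P (a k).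
Proof.
have ge : 0 <= pAk P (a k).
  apply: sumr_ge0 => a' _; apply: sumr_ge0 => y' _; exact: P0.
rewrite lt_def ge andbT; apply/eqP => H.
have := pA_pos a; rewrite Hind (bigD1 k) //= H mul0r ltxx //.
Qed.

Lemma factor a : pY_A P y a = pY P y * \prod_(k < d) (pY_Ak P y (a k) / pY P y).
Proof.
have hY := pY_pos a.
have -> : pY_A P y a = pA_Y P a y * pY P y / pA P a.
  by rewrite /pY_A /pA_Y divfK // gt_eqF.
rewrite Hcind Hind /pAk_Y /pY_Ak mulrAC [RHS]mulrC; congr (_ * _).
rewrite -prodf_div; apply: eq_bigr => k _; by rewrite mulrAC.
Qed.

Lemma key a a' : ln (pY_A P y a / pY_A P y a') =
  \sum_(k < d) ln (pY_Ak P y (a k) / pY_Ak P y (a' k)).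
Proof.
have hY := pY_pos a.
have hk : forall (b : attr T) k, 0 < pY_Ak P y (b k).
  by move=> b k; apply: divr_gt0; [exact: pAkY_pos | exact: pAk_pos].
rewrite !factor invfM mulrACA divff ?gt_eqF // mul1r -prodf_div.
rewrite ln_prod; last first.
  move=> k; apply: divr_gt0; apply: divr_gt0 => //; exact: hk.
apply: eq_bigr => k _; congr ln.
have := hk a k; have := hk a' k; move: hY.
move: (pY P y) (pY_Ak P y (a k)) (pY_Ak P y (a' k)) => p u v hp hv hu.
by field; rewrite !gt_eqF.
Qed.
End Key.

Theorem theorem1 (R : realType) (d : nat) (T : 'I_d -> finType) (Y : finType)
    (P : {ffun attr T * Y -> R}) :
  is_pmf P ->
  (forall (a : attr T) (y : Y), 0 < pAY P a y) ->
  mutually_independent P ->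
  cond_mutually_independent P ->
  ustar P =
    \big[Num.max/0]_(y : Y) \sum_(k < d)
       \big[Num.max/0]_(aa : T k * T k) uk P y aa.1 aa.2
  /\ ustar P <= \sum_(k < d) ukstar P k.
Proof.
move=> [P0 P1] Hpos Hind Hcind.
have [a0 _ _] : exists2 a0 : attr T, true & true.
  case: (pickP (fun _ : attr T * Y => true)) => [[a0 y0] _|H]; first by exists a0.
  by move: P1; rewrite big_pred0 // => /eqP; rewrite eq_sym oner_eq0.
have E : ustar P = \big[Num.max/0]_(y : Y) \sum_(k < d)
       \big[Num.max/0]_(aa : T k * T k) uk P y aa.1 aa.2.
  rewrite /ustar; apply: eq_bigr => y _.
  rewrite -(@maxsum R d T (fun k x x' => ln (pY_Ak P y x / pY_Ak P y x')) a0).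
    apply: eq_bigr => aa _; rewrite /u; congr (`| _ |).
    exact: key.
  move=> k x x' /=; by rewrite -invf_div lnVall.
split => //; rewrite E.
apply: bigmax_le; first by apply: sumr_ge0 => k _; apply: bigmax_ge_id.
move=> y _; apply: ler_sum => k _; rewrite /ukstar.
apply: (le_trans _ (le_bigmax _ (fun y => \big[Num.max/0]_(aa : T k * T k) uk P y aa.1 aa.2) y)).
by [].
Qed.
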